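(* Let $X$ be a compact metric space and $f\colon X\to X$ continuous. If $f$ is expansive and $(X,f)$ has the shadowing property, then $(X,f)$ has $\gamma$-restricted two-sided orbital limit shadowing.
   Context: $f$ is expansive if there is $c>0$ such that for distinct $x,y\in X$ there exists $k\ge0$ with $d(f^k(x),f^k(y))\ge c$. $(X,f)$ has shadowing if for every $\epsilon>0$ there is $\delta>0$ such that for every sequence $\langle x_i\rangle_{i\ge0}$ with $d(f(x_i),x_{i+1})<\delta$ for all $i$ there is $z\in X$ with $d(f^i(z),x_i)<\epsilon$ for all $i\ge0$. A full trajectory is $\langle z_i\rangle_{i\in\mathbb Z}$ with $f(z_i)=z_{i+1}$. For two-sided sequences, $\omega(\langle x_i\rangle)=\bigcap_{M}\overline{\{x_n:n>M\}}$ and $\alpha(\langle x_i\rangle)=\bigcap_M\overline{\{x_n:n<-M\}}$. A two-sided asymptotic pseudo-orbit is $\langle x_i\rangle_{i\in\mathbb Z}$ with $d(f(x_i),x_{i+1})\to0$ as $i\to\pm\infty$. $\gamma$-restricted two-sided orbital limit shadowing: for every two-sided asymptotic pseudo-orbit $\langle x_i\rangle$ with $\alpha(\langle x_i\rangle)=\omega(\langle x_i\rangle)$ there is a full trajectory $\langle z_i\rangle$ with $\alpha(\langle z_i\rangle)=\alpha(\langle x_i\rangle)$ and $\omega(\langle z_i\rangle)=\omega(\langle x_i\rangle)$. *)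

(* Defs.v *)
From Stdlib Require Import Reals ZArith List.
Open Scope R_scope.

Record MetricSpace := {
  mcarrier :> Type;
  mdist : mcarrier -> mcarrier -> R;
  mdist_nonneg : forall x y, 0 <= mdist x y;
  mdist_eq0 : forall x y, mdist x y = 0 <-> x = y;
  mdist_sym : forall x y, mdist x y = mdist y x;
  mdist_tri : forall x y z, mdist x z <= mdist x y + mdist y z
}.

Arguments mdist {m}.

Section MetricDefs.
Variable X : MetricSpace.

Definition mopen (U : X -> Prop) : Prop :=
  forall x, U x -> exists e, 0 < e /\ forall y, mdist x y < e -> U y.

Definition mcompact : Prop :=
  forall (I : Type) (U : I -> X -> Prop),
    (forall i, mopen (U i)) -> (forall x, exists i, U i x) ->
    exists l : list I, forall x, exists i, In i l /\ U i x.

Definition mcontinuous (f : X -> X) : Prop :=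
  forall x e, 0 < e -> exists d, 0 < d /\
    forall y, mdist x y < d -> mdist (f x) (f y) < e.

Definition iter (f : X -> X) (k : nat) (x : X) : X := Nat.iter k f x.

Definition expansive (f : X -> X) : Prop :=
  exists c, 0 < c /\ forall x y : X, x <> y ->
    exists k : nat, c <= mdist (iter f k x) (iter f k y).

Definition shadowing (f : X -> X) : Prop :=
  forall eps, 0 < eps -> exists delta, 0 < delta /\
    forall xs : nat -> X,
      (forall i, mdist (f (xs i)) (xs (S i)) < delta) ->
      exists z : X, forall i, mdist (iter f i z) (xs i) < eps.

Definition closure (S : X -> Prop) : X -> Prop :=
  fun p => forall e, 0 < e -> exists y, S y /\ mdist p y < e.

Definition omega_set (xs : Z -> X) : X -> Prop :=
  fun p => forall M : Z, closure (fun y => exists n : Z, (n > M)%Z /\ y = xs n) p.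

Definition alpha_set (xs : Z -> X) : X -> Prop :=
  fun p => forall M : Z, closure (fun y => exists n : Z, (n < - M)%Z /\ y = xs n) p.

Definition set_eq (A B : X -> Prop) : Prop := forall p, A p <-> B p.

Definition full_trajectory (f : X -> X) (zs : Z -> X) : Prop :=
  forall i : Z, f (zs i) = zs (i + 1)%Z.

Definition two_sided_asymptotic_pseudo_orbit (f : X -> X) (xs : Z -> X) : Prop :=
  forall e, 0 < e -> exists N : nat, forall i : Z,
    (Z.of_nat N <= Z.abs i)%Z -> mdist (f (xs i)) (xs (i + 1)%Z) < e.

Definition gamma_restricted_two_sided_orbital_limit_shadowing (f : X -> X) : Prop :=
  forall xs : Z -> X,
    two_sided_asymptotic_pseudo_orbit f xs ->
    set_eq (alpha_set xs) (omega_set xs) ->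
    exists zs : Z -> X, full_trajectory f zs /\
      set_eq (alpha_set zs) (alpha_set xs) /\
      set_eq (omega_set zs) (omega_set xs).

End MetricDefs.

(* Main.v *)
Require Import Defs.
From Stdlib Require Import Reals ZArith List Lia Lra.
From Stdlib Require Import Classical IndefiniteDescription.
Open Scope R_scope.
Notation iter := Defs.iter.

Lemma d_refl (X : MetricSpace) (x : X) : mdist x x = 0.
Proof. apply (proj2 (mdist_eq0 X x x)); reflexivity. Qed.

Lemma small_inv (e : R) : 0 < e -> exists K : nat, / INR (S K) < e.
Proof.
  intros He. destruct (archimed (/ e)) as [H1 _].
  assert (Hp : (0 < up (/ e))%Z).
  { apply lt_0_IZR. assert (0 < / e) by (apply Rinv_0_lt_compat; lra). lra. }
  exists (Z.to_nat (up (/ e))).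
  rewrite S_INR, INR_IZR_INZ, Z2Nat.id by lia.
  assert (0 < / e) by (apply Rinv_0_lt_compat; lra).
  rewrite <- (Rinv_inv e) at 2.
  apply Rinv_lt_contravar.
  - apply Rmult_lt_0_compat; lra.
  - lra.
Qed.

Lemma ball_open (X : MetricSpace) (p : X) (e : R) : mopen X (fun y => mdist p y < e).
Proof.
  intros x Hx. exists (e - mdist p x). split; [lra|].
  intros y Hy. pose proof (mdist_tri X p x y). lra.
Qed.

Record clrec (X : MetricSpace) (s : nat -> X) := mkcl {
  cl_p : X; cl_e : R; cl_M : nat;
  cl_pos : 0 < cl_e;
  cl_far : forall n, (cl_M <= n)%nat -> cl_e <= mdist (s n) cl_p }.

Lemma cluster (X : MetricSpace) (s : nat -> X) : mcompact X ->
  exists p, forall e, 0 < e -> forall M, exists n, (M <= n)%nat /\ mdist (s n) p < e.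
Proof.
  intros Hc. apply NNPP. intros Hno.
  assert (Hall : forall p, exists r : clrec X s, cl_p _ _ r = p).
  { intros p. apply NNPP; intros Hn. apply Hno. exists p. intros e He M.
    apply NNPP; intros Hn2. apply Hn.
    unshelve eexists (mkcl X s p e M He _); [|reflexivity].
    intros n Hn3. apply Rnot_lt_le. intros Hlt. apply Hn2. exists n; split; assumption. }
  destruct (Hc (clrec X s) (fun r y => mdist (cl_p _ _ r) y < cl_e _ _ r)) as [l Hl].
  - intros r. apply ball_open.
  - intros x. destruct (Hall x) as [r Hr]. exists r. rewrite Hr, d_refl. apply cl_pos.
  - set (Mx := fold_right (fun r acc => Nat.max (cl_M _ _ r) acc) 0%nat l).
    assert (HM : forall r, In r l -> (cl_M _ _ r <= Mx)%nat).
    { unfold Mx; clear. induction l as [|a l IH]; simpl; intros r Hr; [contradiction|].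
      destruct Hr as [<-|Hr]; [lia|]. specialize (IH r Hr). lia. }
    destruct (Hl (s Mx)) as [r [Hin Hr]].
    pose proof (cl_far _ _ r Mx (HM r Hin)). rewrite mdist_sym in Hr. lra.
Qed.

Lemma cluster2 (X : MetricSpace) (a b : nat -> X) : mcompact X ->
  exists p q, forall e, 0 < e -> forall M, exists n, (M <= n)%nat /\
     mdist (a n) p < e /\ mdist (b n) q < e.
Proof.
  intros Hc. destruct (cluster X a Hc) as [p Hp].
  assert (Hg : forall k, exists n, (k <= n)%nat /\ mdist (a n) p < / INR (S k)).
  { intros k. apply Hp. apply Rinv_0_lt_compat, lt_0_INR; lia. }
  destruct (functional_choice _ Hg) as [g Hgk].
  destruct (cluster X (fun k => b (g k)) Hc) as [q Hq].
  exists p, q. intros e He M.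
  destruct (small_inv e He) as [K HK].
  destruct (Hq e He (Nat.max M K)) as [k [Hk1 Hk2]].
  destruct (Hgk k) as [Hg1 Hg2].
  exists (g k). split; [lia|]. split; [|assumption].
  eapply Rlt_le_trans; [apply Hg2|].
  apply Rlt_le in HK. eapply Rle_trans; [|apply HK].
  apply Rinv_le_contravar; [apply lt_0_INR; lia|]. apply le_INR. lia.
Qed.

Lemma iter_S (X : MetricSpace) f k x : iter X f (S k) x = f (iter X f k x).
Proof. reflexivity. Qed.

Lemma iter_plus (X : MetricSpace) f a b x : iter X f (a + b) x = iter X f a (iter X f b x).
Proof. unfold iter. apply Nat.iter_add. Qed.

Lemma iter_cont (X : MetricSpace) f : mcontinuous X f -> forall k, mcontinuous X (iter X f k).
Proof.
  intros Hf k. induction k as [|k IH]; intros x e He.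
  - exists e. split; [assumption|]. intros y Hy. exact Hy.
  - destruct (Hf (iter X f k x) e He) as [d1 [Hd1 H1]].
    destruct (IH x d1 Hd1) as [d2 [Hd2 H2]].
    exists d2. split; [assumption|]. intros y Hy. rewrite !iter_S. apply H1, H2, Hy.
Qed.

Lemma unif_exp (X : MetricSpace) f : mcompact X -> mcontinuous X f ->
  forall c, 0 < c -> (forall x y : X, x <> y -> exists k, c <= mdist (iter X f k x) (iter X f k y)) ->
  forall g, 0 < g -> exists L : nat, forall a b : X,
   (forall i, (i <= L)%nat -> mdist (iter X f i a) (iter X f i b) <= c / 2) -> mdist a b < g.
Proof.
  intros Hc Hf c Hc0 Hexp g Hg. apply NNPP. intros Hno.
  assert (H : forall L : nat, exists ab : X * X,
     (forall i, (i <= L)%nat -> mdist (iter X f i (fst ab)) (iter X f i (snd ab)) <= c / 2)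
     /\ g <= mdist (fst ab) (snd ab)).
  { intros L. apply NNPP; intros Hn. apply Hno. exists L. intros a b Hab.
    apply Rnot_le_lt. intros Hle. apply Hn. exists (a, b). simpl. split; assumption. }
  destruct (functional_choice _ H) as [ab Hab].
  destruct (cluster2 X (fun n => fst (ab n)) (fun n => snd (ab n)) Hc) as [p [q Hpq]].
  assert (Hne : p <> q).
  { intros <-. destruct (Hpq (g/2) ltac:(lra) 0%nat) as [n [_ [H1 H2]]].
    destruct (Hab n) as [_ H3].
    pose proof (mdist_tri X (fst (ab n)) p (snd (ab n))).
    rewrite (mdist_sym X p (snd (ab n))) in H0. lra. }
  destruct (Hexp p q Hne) as [k Hk].
  destruct (iter_cont X f Hf k p (c/4) ltac:(lra)) as [d1 [Hd1 H1]].
  destruct (iter_cont X f Hf k q (c/4) ltac:(lra)) as [d2 [Hd2 H2]].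
  destruct (Hpq (Rmin d1 d2) (Rmin_pos _ _ Hd1 Hd2) k) as [n [Hn [Ha Hb]]].
  pose proof (Rmin_l d1 d2). pose proof (Rmin_r d1 d2).
  assert (A1 : mdist p (fst (ab n)) < d1) by (rewrite mdist_sym; lra).
  assert (A2 : mdist q (snd (ab n)) < d2) by (rewrite mdist_sym; lra).
  specialize (H1 _ A1). specialize (H2 _ A2).
  destruct (Hab n) as [H9 _]. specialize (H9 k Hn).
  pose proof (mdist_tri X (iter X f k p) (iter X f k (fst (ab n))) (iter X f k q)).
  pose proof (mdist_tri X (iter X f k (fst (ab n))) (iter X f k (snd (ab n))) (iter X f k q)).
  rewrite (mdist_sym X (iter X f k (snd (ab n)))) in H5. lra.
Qed.

Lemma uniq_shadow (X : MetricSpace) f c (s : nat -> X) a b :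
  (forall x y : X, x <> y -> exists k, c <= mdist (iter X f k x) (iter X f k y)) ->
  (forall i, mdist (iter X f i a) (s i) < c / 4) ->
  (forall i, mdist (iter X f i b) (s i) < c / 4) -> a = b.
Proof.
  intros Hexp Ha Hb. apply NNPP. intros Hne. destruct (Hexp a b Hne) as [k Hk].
  specialize (Ha k). specialize (Hb k).
  pose proof (mdist_tri X (iter X f k a) (s k) (iter X f k b)).
  rewrite (mdist_sym X (s k)) in H.
  assert (0 <= c/4). { pose proof (mdist_nonneg X (iter X f k a) (s k)). lra. }
  lra.
Qed.

Lemma alpha_rev (X : MetricSpace) (u : Z -> X) p :
  alpha_set X u p <-> omega_set X (fun n => u (- n)%Z) p.
Proof.
  split.
  - intros H M e He. destruct (H M e He) as [y [[n [Hn ->]] Hd]].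
    exists (u n). split; [|assumption]. exists (- n)%Z. split; [lia|]. now rewrite Z.opp_involutive.
  - intros H M e He. destruct (H M e He) as [y [[n [Hn ->]] Hd]].
    exists (u (-n)%Z). split; [|assumption]. exists (- n)%Z. split; [lia|]. reflexivity.
Qed.

Definition tailapx (X : MetricSpace) (u v : Z -> X) : Prop :=
  forall eta, 0 < eta -> forall M : Z, exists M' : Z, forall n, (n > M')%Z ->
    exists n', (n' > M)%Z /\ mdist (u n) (v n') < eta.

Lemma tailapx_sub (X : MetricSpace) u v : tailapx X u v ->
  forall p, omega_set X u p -> omega_set X v p.
Proof.
  intros T p Hp M e He. destruct (T (e/2) ltac:(lra) M) as [M' HM'].
  destruct (Hp M' (e/2) ltac:(lra)) as [y [[n [Hn ->]] Hd]].
  destruct (HM' n Hn) as [n' [Hn' Hd']]. exists (v n'). split; [exists n'; split; auto|].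
  pose proof (mdist_tri X p (u n) (v n')). lra.
Qed.

Lemma tailapx_eq (X : MetricSpace) u v : tailapx X u v -> tailapx X v u ->
  set_eq X (omega_set X u) (omega_set X v).
Proof. intros T1 T2 p. split; [apply tailapx_sub; auto | apply tailapx_sub; auto]. Qed.

Lemma alpha_eq_of (X : MetricSpace) u v :
  set_eq X (omega_set X (fun n => u (- n)%Z)) (omega_set X (fun n => v (- n)%Z)) ->
  set_eq X (alpha_set X u) (alpha_set X v).
Proof. intros H p. rewrite !alpha_rev. apply H. Qed.

Lemma close_sets (X : MetricSpace) (u v : Z -> X) :
  (forall eta, 0 < eta -> exists J : Z, forall n, (J <= Z.abs n)%Z -> mdist (u n) (v n) < eta) ->
  set_eq X (omega_set X u) (omega_set X v) /\ set_eq X (alpha_set X u) (alpha_set X v).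
Proof.
  intros H. split.
  - apply tailapx_eq; intros eta He M; destruct (H eta He) as [J HJ];
      exists (Z.max M J); intros n Hn; exists n; (split; [lia|]).
    + apply HJ; lia.
    + rewrite mdist_sym; apply HJ; lia.
  - apply alpha_eq_of, tailapx_eq; intros eta He M; destruct (H eta He) as [J HJ];
      exists (Z.max M J); intros n Hn; exists n; (split; [lia|]).
    + apply HJ; lia.
    + rewrite mdist_sym; apply HJ; lia.
Qed.

Lemma back_eq_alpha (X : MetricSpace) (u v : Z -> X) m :
  (forall i, (i < m)%Z -> u i = v i) -> set_eq X (alpha_set X u) (alpha_set X v).
Proof.
  intros H. apply alpha_eq_of, tailapx_eq; intros eta He M;
    exists (Z.max M (- m)); intros n Hn; exists n; (split; [lia|]);
    rewrite (H (- n)%Z) by lia; rewrite d_refl; exact He.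
Qed.

Lemma shift_omega (X : MetricSpace) (u v : Z -> X) m s :
  (forall i, (i >= m)%Z -> v i = u (i + s)%Z) -> set_eq X (omega_set X v) (omega_set X u).
Proof.
  intros H. apply tailapx_eq; intros eta He M.
  - exists (Z.max m (M - s)). intros n Hn. exists (n + s)%Z. split; [lia|].
    rewrite H by lia. rewrite d_refl; exact He.
  - exists (Z.max (m + s) (M + s)). intros n Hn. exists (n - s)%Z. split; [lia|].
    rewrite H by lia. replace (n - s + s)%Z with n by lia. rewrite d_refl; exact He.
Qed.

Lemma splice (X : MetricSpace) f xs d0 : mcompact X -> 0 < d0 ->
  two_sided_asymptotic_pseudo_orbit X f xs -> set_eq X (alpha_set X xs) (omega_set X xs) ->
  exists y, (forall i, mdist (f (y i)) (y (i + 1)%Z) < d0) /\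
    two_sided_asymptotic_pseudo_orbit X f y /\
    set_eq X (alpha_set X y) (alpha_set X xs) /\ set_eq X (omega_set X y) (omega_set X xs).
Proof.
  intros Hc Hd0 Hx Hax.
  destruct (cluster X (fun n => xs (Z.of_nat n)) Hc) as [q Hq].
  assert (Hqo : omega_set X xs q).
  { intros M e He. destruct (Hq e He (S (Z.to_nat M))) as [n [Hn Hd]].
    exists (xs (Z.of_nat n)). split; [exists (Z.of_nat n); split; [lia|reflexivity]|].
    rewrite mdist_sym; exact Hd. }
  pose proof (proj2 (Hax q) Hqo) as Hqa.
  destruct (Hx (d0/2) ltac:(lra)) as [N HN].
  destruct (Hqo (Z.of_nat N) (d0/4) ltac:(lra)) as [yK [[K [HK ->]] HdK]].
  destruct (Hqa (Z.of_nat N + 1)%Z (d0/4) ltac:(lra)) as [ym [[m [Hm ->]] Hdm]].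
  exists (fun i => if Z.ltb i m then xs i else xs (i - m + K)%Z).
  split; [|split; [|split]].
  - intros i. destruct (Z.ltb_spec i m), (Z.ltb_spec (i+1) m).
    + assert (mdist (f (xs i)) (xs (i+1)%Z) < d0/2) by (apply HN; lia). lra.
    + replace (i + 1 - m + K)%Z with K by lia.
      assert (mdist (f (xs i)) (xs (i+1)%Z) < d0/2) by (apply HN; lia).
      replace (i+1)%Z with m in H1 by lia.
      pose proof (mdist_tri X (f (xs i)) (xs m) (xs K)).
      pose proof (mdist_tri X (xs m) q (xs K)). rewrite (mdist_sym X (xs m) q) in H3. lra.
    + lia.
    + replace (i + 1 - m + K)%Z with ((i - m + K) + 1)%Z by lia.
      assert (mdist (f (xs (i - m + K)%Z)) (xs ((i - m + K) + 1)%Z) < d0/2) by (apply HN; lia). lra.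
  - intros e He. destruct (Hx e He) as [N' HN'].
    exists (N' + Z.to_nat (Z.abs m) + Z.to_nat (Z.abs K) + 2)%nat. intros i Hi.
    destruct (Z.ltb_spec i m), (Z.ltb_spec (i+1) m).
    + apply HN'; lia.
    + lia.
    + lia.
    + replace (i + 1 - m + K)%Z with ((i - m + K) + 1)%Z by lia. apply HN'; lia.
  - apply (back_eq_alpha X _ _ m). intros i Hi. destruct (Z.ltb_spec i m); [reflexivity|lia].
  - apply (shift_omega X xs _ m (K - m)). intros i Hi.
    destruct (Z.ltb_spec i m); [lia|]. f_equal; lia.
Qed.

Lemma build_traj (X : MetricSpace) f c (y : Z -> X) d0 : 0 < c ->
  (forall x y : X, x <> y -> exists k, c <= mdist (iter X f k x) (iter X f k y)) ->
  (forall xs : nat -> X, (forall i, mdist (f (xs i)) (xs (S i)) < d0) ->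
      exists z : X, forall i, mdist (iter X f i z) (xs i) < c / 4) ->
  (forall i, mdist (f (y i)) (y (i + 1)%Z) < d0) ->
  exists z, full_trajectory X f z /\ forall j, mdist (z j) (y j) < c / 4.
Proof.
  intros Hc0 Hexp Hsh Hy.
  assert (Hw : forall N : nat, exists w, forall i : nat,
     mdist (iter X f i w) (y (Z.of_nat i - Z.of_nat N)%Z) < c / 4).
  { intros N. apply Hsh. intros i.
    replace (Z.of_nat (S i) - Z.of_nat N)%Z with ((Z.of_nat i - Z.of_nat N) + 1)%Z by lia.
    apply Hy. }
  destruct (functional_choice _ Hw) as [w Hw'].
  assert (Hcons : forall N k, iter X f k (w (N + k)%nat) = w N).
  { intros N k. apply (uniq_shadow X f c (fun i => y (Z.of_nat i - Z.of_nat N)%Z)); auto.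
    intros i. rewrite <- iter_plus.
    replace (Z.of_nat i - Z.of_nat N)%Z with (Z.of_nat (i + k) - Z.of_nat (N + k))%Z by lia.
    apply Hw'. }
  exists (fun j => iter X f (Z.to_nat j) (w (Z.to_nat (- j)))). split.
  - intros j. destruct (Z_lt_le_dec j 0).
    + replace (Z.to_nat j) with 0%nat by lia. replace (Z.to_nat (j + 1)) with 0%nat by lia.
      replace (Z.to_nat (- j)) with (Z.to_nat (- (j + 1)) + 1)%nat by lia.
      exact (Hcons (Z.to_nat (- (j + 1))) 1%nat).
    + replace (Z.to_nat (- j)) with 0%nat by lia. replace (Z.to_nat (- (j + 1))) with 0%nat by lia.
      replace (Z.to_nat (j + 1)) with (S (Z.to_nat j)) by lia. reflexivity.
  - intros j. pose proof (Hw' (Z.to_nat (- j)) (Z.to_nat j)) as H.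
    replace (Z.of_nat (Z.to_nat j) - Z.of_nat (Z.to_nat (- j)))%Z with j in H by lia. exact H.
Qed.

Lemma traj_iter (X : MetricSpace) f z : full_trajectory X f z ->
  forall i j, iter X f i (z j) = z (j + Z.of_nat i)%Z.
Proof.
  intros Hz i. induction i as [|i IH]; intros j.
  - simpl. f_equal. lia.
  - rewrite iter_S, IH, Hz. f_equal. lia.
Qed.

Lemma traj_close (X : MetricSpace) f c (y z : Z -> X) : mcompact X -> mcontinuous X f -> 0 < c ->
  (forall x y : X, x <> y -> exists k, c <= mdist (iter X f k x) (iter X f k y)) ->
  shadowing X f -> full_trajectory X f z -> two_sided_asymptotic_pseudo_orbit X f y ->
  (forall j, mdist (z j) (y j) < c / 4) ->
  forall eta, 0 < eta -> exists J : Z, forall n, (J <= Z.abs n)%Z -> mdist (z n) (y n) < eta.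
Proof.
  intros Hc Hf Hc0 Hexp Hsh Hz Hy Hzy eta Heta.
  set (e1 := Rmin (eta / 2) (c / 4)).
  assert (He1 : 0 < e1) by (apply Rmin_pos; lra).
  assert (H : e1 <= eta/2) by apply Rmin_l. assert (H0 : e1 <= c/4) by apply Rmin_r.
  destruct (Hsh e1 He1) as [d1 [Hd1 Hs1]].
  destruct (unif_exp X f Hc Hf c Hc0 Hexp (eta / 2) ltac:(lra)) as [L HL].
  destruct (Hy d1 Hd1) as [N1 HN1].
  exists (Z.of_nat N1 + Z.of_nat L)%Z. intros j Hj.
  assert (Hwin : forall i : nat, (i < L)%nat ->
     mdist (f (y (j + Z.of_nat i)%Z)) (y (j + Z.of_nat i + 1)%Z) < d1).
  { intros i Hi. apply HN1. clear -Hi Hj; lia. }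
  set (s := fun i : nat => if Nat.leb i L then y (j + Z.of_nat i)%Z
                          else iter X f (i - L) (y (j + Z.of_nat L)%Z)).
  destruct (Hs1 s) as [w Hw].
  { intros i. unfold s. destruct (Nat.leb_spec i L), (Nat.leb_spec (S i) L).
    - replace (j + Z.of_nat (S i))%Z with (j + Z.of_nat i + 1)%Z by lia. apply Hwin; lia.
    - assert (i = L) by lia. subst i. replace (S L - L)%nat with 1%nat by lia.
      change (iter X f 1 ?a) with (f a). rewrite d_refl. exact Hd1.
    - lia.
    - replace (S i - L)%nat with (S (i - L)) by lia. rewrite iter_S, d_refl. exact Hd1. }
  assert (A1 : mdist (z j) w < eta / 2).
  { apply HL. intros i Hi. rewrite (traj_iter X f z Hz).
    specialize (Hw i). unfold s in Hw. rewrite (proj2 (Nat.leb_le i L) Hi) in Hw.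
    specialize (Hzy (j + Z.of_nat i)%Z).
    pose proof (mdist_tri X (z (j + Z.of_nat i)%Z) (y (j + Z.of_nat i)%Z) (iter X f i w)).
    rewrite (mdist_sym X (y _) (iter X f i w)) in H1. lra. }
  assert (A2 : mdist w (y j) < eta / 2).
  { specialize (Hw 0%nat). unfold s in Hw. simpl in Hw.
    replace (j + 0)%Z with j in Hw by lia. lra. }
  pose proof (mdist_tri X (z j) w (y j)). lra.
Qed.

Theorem mainTheorem3 (X : MetricSpace) (f : X -> X) :
  mcompact X -> mcontinuous X f ->
  expansive X f -> shadowing X f ->
  gamma_restricted_two_sided_orbital_limit_shadowing X f.
Proof.
  intros Hc Hf [c [Hc0 Hexp]] Hsh xs Hx Hax.
  destruct (Hsh (c / 4) ltac:(lra)) as [d0 [Hd0 Hsh0]].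
  destruct (splice X f xs d0 Hc Hd0 Hx Hax) as [y [Hy1 [Hy2 [Hya Hyo]]]].
  destruct (build_traj X f c y d0 Hc0 Hexp Hsh0 Hy1) as [z [Hz Hzy]].
  destruct (close_sets X z y (traj_close X f c y z Hc Hf Hc0 Hexp Hsh Hz Hy2 Hzy))
    as [Ho Ha].
  exists z. split; [exact Hz|]. split.
  - intros p. rewrite (Ha p). apply Hya.
  - intros p. rewrite (Ho p). apply Hyo.
Qed.
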